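(* Let $\theta_N=1+N^{-2/3}w_N$ with $w_N>0$, $(\log\log N)^2/w_N\to0$ and $w_N/(\log N)^2\to0$. For $1\le i\le N$ let $r_i=1+\sqrt{1-\frac{i-1}{N\theta_N^2}}$, $m_i=1-\sqrt{1-\frac{i-1}{N\theta_N^2}}$, $\gamma_i=m_i/r_i$; for $2\le i\le N$ let $\delta_i=\frac{m_i}{r_i}-\frac{m_i}{r_{i-1}}$, and for $3\le i\le N$ let \[ T_{\delta i}=\delta_i+\gamma_i\delta_{i-1}+\gamma_i\gamma_{i-1}\delta_{i-2}+\dots+\gamma_i\gamma_{i-1}\cdots\gamma_4\delta_3. \] Then, for large enough $N$, \[ \sum_{i=3}^NT_{\delta i}=\frac16\log N+O(\log\log N). \] *)

(* Defs.v *)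
From Stdlib Require Import Reals.
From Coquelicot Require Import Coquelicot.
Open Scope R_scope.

Fixpoint rsum (f : nat -> R) (n : nat) : R :=
  match n with O => 0 | S n' => rsum f n' + f n' end.
Fixpoint rprod (f : nat -> R) (n : nat) : R :=
  match n with O => 1 | S n' => rprod f n' * f n' end.

(* sum_{k=a}^{b} f k  (empty, = 0, if b < a) *)
Definition sum_range (a b : nat) (f : nat -> R) : R :=
  rsum (fun t => f (a + t)%nat) (b + 1 - a).
(* prod_{k=a}^{b} f k  (empty, = 1, if b < a) *)
Definition prod_range (a b : nat) (f : nat -> R) : R :=
  rprod (fun t => f (a + t)%nat) (b + 1 - a).

Section Defs.
Variables (w : nat -> R) (N : nat).

Definition theta : R := 1 + Rpower (INR N) (-(2/3)) * w N.

Definition sq_i (i : nat) : R :=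
  sqrt (1 - (INR i - 1) / (INR N * theta ^ 2)).
Definition r_ (i : nat) : R := 1 + sq_i i.
Definition m_ (i : nat) : R := 1 - sq_i i.
Definition gamma_ (i : nat) : R := m_ i / r_ i.
Definition delta_ (i : nat) : R := m_ i / r_ i - m_ i / r_ (i - 1).

(* T_{delta i} = sum_{k=3}^{i} (prod_{j=k+1}^{i} gamma_j) delta_k *)
Definition T_delta (i : nat) : R :=
  sum_range 3 i (fun k => prod_range (k + 1) i gamma_ * delta_ k).

Definition total_T : R := sum_range 3 N T_delta.
End Defs.

(* Main.v *)
Require Import Defs.
From Stdlib Require Import Reals Lra Lia Psatz.
From Coquelicot Require Import Coquelicot.
Open Scope R_scope.

Lemma ln_le_sub1 x : 0 < x -> ln x <= x - 1.
Proof. intro H. pose proof (exp_ineq1_le (ln x)). rewrite exp_ln in H0; lra. Qed.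

Lemma ln_ge_1inv x : 0 < x -> 1 - / x <= ln x.
Proof. intro H. pose proof (ln_le_sub1 (/ x) (Rinv_0_lt_compat _ H)).
 rewrite ln_Rinv in H0; lra. Qed.

Ltac pos := repeat (apply Rmult_lt_0_compat || apply pow_lt || apply Rinv_0_lt_compat || apply Rdiv_lt_0_compat); try lra.

Lemma div_le_l x y c : 0 < c -> x <= y * c -> x / c <= y.
Proof. intros Hc H. apply Rmult_le_reg_r with c; auto. unfold Rdiv.
  rewrite Rmult_assoc, Rinv_l by lra. lra. Qed.

Definition U (s p : R) := (1 - s) * (p - s) / (2 * s * (1 + p)).

Lemma p_ge_s a s p : 0 < a -> 0 < s -> 0 < p -> p^2 = s^2 + a -> s <= p.
Proof. intros. nra. Qed.

Lemma U_upper a s p : 0 < a -> 0 < s -> s <= 1 -> 0 < p -> p^2 = s^2 + a ->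
  U s p <= /2 * (ln p - ln s) + a/8 * (/ s^2 - / p^2).
Proof.
  intros Ha Hs Hs1 Hp Hps.
  assert (Hsp : s <= p) by nra.
  assert (H1 : U s p <= (p - s) / (2 * s)).
  { assert (E : (p - s) / (2 * s) - U s p = (p-s) * (p + s) / (2 * s * (1+p))) by (unfold U; field; lra).
    assert (0 <= (p-s) * (p + s) / (2 * s * (1+p))).
    { apply Rmult_le_pos. nra. apply Rlt_le, Rinv_0_lt_compat. nra. }
    lra. }
  assert (H2 : 1 - s / p <= ln p - ln s).
  { rewrite <- ln_div by lra. replace (1 - s/p) with (1 - / (p / s)) by (field; lra).
    apply ln_ge_1inv. apply Rdiv_lt_0_compat; lra. }
  assert (H3 : (p - s) / (2 * s) - /2 * (1 - s/p) <= a / 8 * (/ s ^ 2 - / p ^ 2)).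
  { assert (Ea : a = (p - s) * (p + s)) by nra.
    assert (E : a / 8 * (/ s ^ 2 - / p ^ 2) - ((p - s) / (2 * s) - /2 * (1 - s/p))
                = (p-s)^4 / (8 * s^2 * p^2)).
    { rewrite Ea. field. split; lra. }
    assert (0 <= (p-s)^4 / (8 * s^2 * p^2)).
    { apply Rmult_le_pos. apply pow_le; lra. apply Rlt_le; pos. }
    lra. }
  lra.
Qed.

Lemma U_lower a s p : 0 < a -> 0 < s -> s <= 1 -> 0 < p -> p^2 = s^2 + a -> a <= s^2 ->
  /2 * (ln p - ln s) - 3/2 * (p - s) <= U s p.
Proof.
  intros Ha Hs Hs1 Hp Hps Has.
  assert (Hsp : s <= p) by nra.
  assert (Hp2 : p <= 2 * s) by nra.
  assert (H2 : ln p - ln s <= (p - s) / s).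
  { rewrite <- ln_div by lra. replace ((p - s)/s) with (p / s - 1) by (field; lra).
    apply ln_le_sub1. apply Rdiv_lt_0_compat; lra. }
  assert (E : (p - s) / (2 * s) - U s p = (p-s) * (p + s) / (2 * s * (1+p))) by (unfold U; field; lra).
  assert ((p-s) * (p + s) / (2 * s * (1+p)) <= 3/2 * (p - s)).
  { apply div_le_l. pos.
    replace (3 / 2 * (p - s) * (2 * s * (1 + p))) with ((p-s) * (3*s*(1+p))) by field.
    apply Rmult_le_compat_l; nra. }
  assert ((p - s) / (2 * s) = /2 * ((p - s) / s)) by (field; lra).
  lra.
Qed.

Lemma U_nonneg s p : 0 < s -> s <= 1 -> s <= p -> 0 <= U s p.
Proof. intros. unfold U. apply Rmult_le_pos. nra. apply Rlt_le, Rinv_0_lt_compat. nra. Qed.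

Lemma U_mono a s' s p : 0 < a -> 0 < s' -> s' <= s -> s <= 1 -> 
  p^2 = s^2 + a -> s^2 = s'^2 + a -> 0 < p -> U s p <= U s' s.
Proof.
  intros Ha Hs' Hss Hs1 E1 E2 Hp.
  assert (Hsp : s <= p) by nra.
  assert (Hd : p - s <= s - s') by nra.
  unfold U, Rdiv. apply Rmult_le_compat.
  - nra.
  - apply Rlt_le, Rinv_0_lt_compat. nra.
  - apply Rmult_le_compat; nra.
  - apply Rinv_le_contravar. nra. nra.
Qed.

Lemma U_small a s p : 0 < a -> 0 < s -> s <= 1 -> 0 < p -> p^2 = s^2 + a ->
  U s p * ((1 + s) / (2 * s)) <= a / (4 * s^3).
Proof.
  intros Ha Hs Hs1 Hp Hps.
  assert (Hsp : s <= p) by nra.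
  assert (H1 : U s p <= (p - s) / (2 * s)).
  { assert (E : (p - s) / (2 * s) - U s p = (p-s) * (p + s) / (2 * s * (1+p))) by (unfold U; field; lra).
    assert (0 <= (p-s) * (p + s) / (2 * s * (1+p))).
    { apply Rmult_le_pos. nra. apply Rlt_le; pos. }
    lra. }
  assert (H2 : (p - s) / (2 * s) <= a / (4 * s^2)).
  { assert (E : a / (4 * s^2) - (p - s) / (2 * s) = (p - s)^2 / (4 * s^2)).
    { assert (Ea : a = (p - s) * (p + s)) by nra. rewrite Ea. field. lra. }
    assert (0 <= (p - s)^2 / (4 * s^2)). { apply Rmult_le_pos. nra. apply Rlt_le; pos. }
    lra. }
  assert (H3 : (1 + s) / (2 * s) <= / s).
  { apply div_le_l. pos. replace (/ s * (2 * s)) with 2 by (field; lra). lra. }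
  assert (H0 := U_nonneg s p Hs Hs1 Hsp).
  apply Rle_trans with (a / (4 * s^2) * / s).
  - apply Rmult_le_compat; try lra. apply Rlt_le; pos.
  - right. field. lra.
Qed.
Lemma ind2 (P : nat -> Prop) : P 2%nat -> (forall n, (2 <= n)%nat -> P n -> P (S n)) ->
  forall n, (2 <= n)%nat -> P n.
Proof.
  intros H0 HS n Hn. replace n with (2 + (n - 2))%nat by lia.
  induction (n - 2)%nat as [|k IH]. exact H0.
  replace (2 + S k)%nat with (S (2 + k)) by lia. apply HS. lia. exact IH.
Qed.

Lemma sr_base f : sum_range 3 2 f = 0.
Proof. reflexivity. Qed.

Lemma sr_S f n : (2 <= n)%nat -> sum_range 3 (S n) f = sum_range 3 n f + f (S n).
Proof.
  intro H. unfold sum_range. replace (S n + 1 - 3)%nat with (S (n + 1 - 3)) by lia.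
  simpl rsum. f_equal. f_equal. lia.
Qed.

Lemma sr_ext f g n : (forall i, (3 <= i <= n)%nat -> f i = g i) -> sum_range 3 n f = sum_range 3 n g.
Proof.
  destruct (Compare_dec.le_lt_dec 2 n) as [H|H].
  - revert H. apply (ind2 (fun n => (forall i, (3 <= i <= n)%nat -> f i = g i) -> sum_range 3 n f = sum_range 3 n g)).
    + intros; reflexivity.
    + intros m Hm IH Hfg. rewrite !sr_S by lia. rewrite IH, Hfg by (intros; try apply Hfg; lia). reflexivity.
  - intros. unfold sum_range. replace (n + 1 - 3)%nat with 0%nat by lia. reflexivity.
Qed.

Lemma sr_le f g n : (forall i, (3 <= i <= n)%nat -> f i <= g i) -> sum_range 3 n f <= sum_range 3 n g.
Proof.
  destruct (Compare_dec.le_lt_dec 2 n) as [H|H].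
  - revert H. apply (ind2 (fun n => (forall i, (3 <= i <= n)%nat -> f i <= g i) -> sum_range 3 n f <= sum_range 3 n g)).
    + intros; rewrite !sr_base; lra.
    + intros m Hm IH Hfg. rewrite !sr_S by lia.
      assert (sum_range 3 m f <= sum_range 3 m g) by (apply IH; intros; apply Hfg; lia).
      assert (f (S m) <= g (S m)) by (apply Hfg; lia). lra.
  - intros. unfold sum_range. replace (n + 1 - 3)%nat with 0%nat by lia. simpl; lra.
Qed.

Lemma sr_plus f g n : sum_range 3 n (fun i => f i + g i) = sum_range 3 n f + sum_range 3 n g.
Proof.
  unfold sum_range. induction (n + 1 - 3)%nat as [|k IH]; cbn [rsum]. lra. rewrite IH. lra.
Qed.

Lemma sr_scal c f n : sum_range 3 n (fun i => c * f i) = c * sum_range 3 n f.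
Proof.
  unfold sum_range. induction (n + 1 - 3)%nat as [|k IH]; cbn [rsum]. lra. rewrite IH. lra.
Qed.

Lemma sr_minus f g n : sum_range 3 n (fun i => f i - g i) = sum_range 3 n f - sum_range 3 n g.
Proof.
  unfold sum_range. induction (n + 1 - 3)%nat as [|k IH]; cbn [rsum]. lra. rewrite IH. lra.
Qed.

Lemma sr_tele F n : (2 <= n)%nat -> sum_range 3 n (fun i => F (i - 1)%nat - F i) = F 2%nat - F n.
Proof.
  apply (ind2 (fun n => sum_range 3 n (fun i => F (i - 1)%nat - F i) = F 2%nat - F n)).
  - rewrite sr_base. lra.
  - intros m Hm IH. rewrite sr_S by lia. rewrite IH. replace (S m - 1)%nat with m by lia. lra.
Qed.

Lemma rprod_S f n : rprod f (S n) = rprod f n * f n.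
Proof. reflexivity. Qed.

Lemma rsum_ext_lt f g n : (forall t, (t < n)%nat -> f t = g t) -> rsum f n = rsum g n.
Proof. induction n; intros H; simpl. reflexivity. rewrite IHn by (intros; apply H; lia). rewrite H by lia. reflexivity. Qed.

Lemma rsum_scal c f n : rsum (fun t => f t * c) n = rsum f n * c.
Proof. induction n; simpl. lra. rewrite IHn. lra. Qed.

Lemma T_rec (g d : nat -> R) i : (2 <= i)%nat ->
  sum_range 3 (S i) (fun k => prod_range (k+1) (S i) g * d k)
  = d (S i) + g (S i) * sum_range 3 i (fun k => prod_range (k+1) i g * d k).
Proof.
  intro H. rewrite sr_S by exact H.
  assert (E1 : prod_range (S i + 1) (S i) g = 1).
  { unfold prod_range. replace (S i + 1 - (S i + 1))%nat with 0%nat by lia. reflexivity. }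
  rewrite E1.
  assert (E2 : sum_range 3 i (fun k => prod_range (k + 1) (S i) g * d k)
             = sum_range 3 i (fun k => prod_range (k + 1) i g * d k) * g (S i)).
  { unfold sum_range. rewrite <- rsum_scal. apply rsum_ext_lt. intros t Ht.
    unfold prod_range. replace (S i + 1 - (3 + t + 1))%nat with (S (i + 1 - (3 + t + 1))) by lia.
    rewrite rprod_S. replace (3 + t + 1 + (i + 1 - (3 + t + 1)))%nat with (S i) by lia. ring. }
  rewrite E2. ring.
Qed.

Definition gm (x : R) := (1 - x) / (1 + x).

Lemma gm_bounds x y : 0 < y -> y <= x -> x <= 1 -> 0 <= gm x /\ gm x <= gm y /\ gm y < 1.
Proof.
  intros. unfold gm. split; [|split].
  - apply Rmult_le_pos; [lra|]. apply Rlt_le; pos.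
  - replace ((1-x)/(1+x)) with (2 * /(1+x) - 1) by (field; lra).
    replace ((1-y)/(1+y)) with (2 * /(1+y) - 1) by (field; lra).
    assert (/(1+x) <= /(1+y)) by (apply Rinv_le_contravar; lra). lra.
  - apply div_le_l in H1 || idtac.
    assert ((1-y)/(1+y) = 1 - 2*y/(1+y)) by (field; lra).
    assert (0 < 2*y/(1+y)) by pos. lra.
Qed.

Lemma delta_eq s p : 0 < s -> s <= 1 -> 0 < p ->
  (1 - s)/(1 + s) - (1 - s)/(1 + p) = (1 - gm s) * U s p.
Proof. intros. unfold gm, U. field. lra. Qed.

Lemma main_bound (N : nat) (s : nat -> R) (a : R) (T : nat -> R) :
  (3 <= N)%nat -> 0 < a ->
  (forall i, (2 <= i <= N)%nat -> 0 < s i /\ s i <= 1) ->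
  (forall i, (3 <= i <= N)%nat -> s (i-1)%nat ^ 2 = s i ^ 2 + a) ->
  a <= s N ^ 2 -> a <= s N ^ 3 -> /2 <= s 2%nat ->
  T 2%nat = 0 ->
  (forall i, (2 <= i < N)%nat -> T (S i) =
     ((1 - s (S i))/(1 + s (S i)) - (1 - s (S i))/(1 + s i)) + (1 - s (S i))/(1 + s (S i)) * T i) ->
  -(1/2) * ln (s N) - 3 <= sum_range 3 N T <= -(1/2) * ln (s N) + 1.
Proof.
  intros HN Ha Hs Hrec HaN HaN3 Hs2 HT2 HT.
  assert (Hsq : forall i, (2 <= i <= N)%nat -> s N ^ 2 <= s i ^ 2).
  { assert (forall k, (k <= N - 2)%nat -> s N ^ 2 <= s (N - k)%nat ^ 2).
    { induction k; intros Hk. replace (N - 0)%nat with N by lia. lra.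
      replace (N - S k)%nat with ((N - k) - 1)%nat by lia. rewrite Hrec by lia.
      specialize (IHk ltac:(lia)). lra. }
    intros i Hi. replace i with (N - (N - i))%nat by lia. apply H. lia. }
  assert (Hmono : forall i, (2 <= i <= N)%nat -> s N <= s i).
  { intros i Hi. specialize (Hsq i Hi). destruct (Hs i Hi). destruct (Hs N ltac:(lia)). nra. }
  assert (Hai : forall i, (2 <= i <= N)%nat -> a <= s i ^ 2).
  { intros i Hi. specialize (Hsq i Hi). lra. }
  set (u := fun i => U (s i) (s (i - 1)%nat)).
  set (g := gm (s N)).
  destruct (Hs N ltac:(lia)) as [HsN0 HsN1].
  assert (Hgam : forall i, (2 <= i <= N)%nat -> 0 <= gm (s i) /\ gm (s i) <= g /\ g < 1).
  { intros i Hi. destruct (Hs i Hi). apply gm_bounds; auto. }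
  assert (Hu0 : forall i, (3 <= i <= N)%nat -> 0 <= u i).
  { intros i Hi. unfold u. destruct (Hs i ltac:(lia)). destruct (Hs (i-1)%nat ltac:(lia)).
    apply U_nonneg; auto. apply (p_ge_s a); auto; try (apply Hrec; lia). }
  assert (Humono : forall i, (3 <= i < N)%nat -> u i <= u (S i)).
  { intros i Hi. unfold u. replace (S i - 1)%nat with i by lia.
    destruct (Hs i ltac:(lia)). destruct (Hs (i-1)%nat ltac:(lia)). destruct (Hs (S i) ltac:(lia)).
    apply (U_mono a); auto.
    - assert (s i ^ 2 = s (S i) ^ 2 + a) by (replace i with (S i - 1)%nat at 1 by lia; apply Hrec; lia). nra.
    - apply Hrec; lia.
    - replace i with (S i - 1)%nat at 1 by lia; apply Hrec; lia. }
  assert (HTrec : forall i, (2 <= i < N)%nat -> T (S i) = (1 - gm (s (S i))) * u (S i) + gm (s (S i)) * T i).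
  { intros i Hi. rewrite HT by lia. unfold u. replace (S i - 1)%nat with i by lia.
    destruct (Hs i ltac:(lia)). destruct (Hs (S i) ltac:(lia)).
    rewrite <- delta_eq by auto. unfold gm. reflexivity. }
  assert (HT0 : forall n, (2 <= n)%nat -> (n <= N)%nat -> 0 <= T n).
  { apply (ind2 (fun n => (n <= N)%nat -> 0 <= T n)).
    - intros; lra.
    - intros n Hn IH HnN. rewrite HTrec by lia.
      destruct (Hgam (S n) ltac:(lia)) as [G1 [G2 G3]].
      specialize (IH ltac:(lia)). specialize (Hu0 (S n) ltac:(lia)).
      apply Rplus_le_le_0_compat; apply Rmult_le_pos; lra. }
  assert (HTu : forall n, (2 <= n)%nat -> (3 <= n <= N)%nat -> T n <= u n).
  { apply (ind2 (fun n => (3 <= n <= N)%nat -> T n <= u n)).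
    - intros; lia.
    - intros n Hn IH HnN. rewrite HTrec by lia.
      destruct (Hgam (S n) ltac:(lia)) as [G1 [G2 G3]].
      assert (T n <= u (S n)).
      { destruct (Nat.eq_dec n 2) as [->|Hn2]. rewrite HT2. apply Hu0; lia.
        apply Rle_trans with (u n). apply IH; lia. apply Humono; lia. }
      assert (gm (s (S n)) * T n <= gm (s (S n)) * u (S n)) by (apply Rmult_le_compat_l; lra).
      lra. }
  set (D := fun i => u i - T i).
  assert (HD0 : forall i, (3 <= i <= N)%nat -> 0 <= D i).
  { intros i Hi. unfold D. specialize (HTu i ltac:(lia) Hi). lra. }
  assert (HQ : forall n, (2 <= n)%nat -> (3 <= n <= N)%nat ->
     sum_range 3 n D <= u n + g * sum_range 3 (n - 1) D).
  { apply (ind2 (fun n => (3 <= n <= N)%nat -> sum_range 3 n D <= u n + g * sum_range 3 (n - 1) D)).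
    - intros; lia.
    - intros n Hn IH HnN. rewrite sr_S by lia. replace (S n - 1)%nat with n by lia.
      destruct (Hgam (S n) ltac:(lia)) as [G1 [G2 G3]].
      assert (ED : D (S n) = gm (s (S n)) * (u (S n) - T n)).
      { unfold D. rewrite HTrec by lia. ring. }
      destruct (Nat.eq_dec n 2) as [->|Hn2].
      + rewrite sr_base, ED, HT2. specialize (Hu0 3%nat ltac:(lia)).
        assert (gm (s 3%nat) * (u 3%nat - 0) <= u 3%nat) by nra.
        simpl (S 2). lra.
      + specialize (IH ltac:(lia)).
        assert (Esn : sum_range 3 n D = sum_range 3 (n-1) D + D n).
        { replace n with (S (n-1)) at 1 by lia. rewrite sr_S by lia. do 3 f_equal. lia. }
        assert (Hmu := Humono n ltac:(lia)).
        assert (HDn := HD0 n ltac:(lia)).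
        assert (ED2 : u (S n) - T n = (u (S n) - u n) + D n) by (unfold D; ring).
        rewrite ED2 in ED.
        assert (D (S n) <= (u (S n) - u n) + g * D n).
        { rewrite ED. rewrite Rmult_plus_distr_l.
          assert (gm (s (S n)) * (u (S n) - u n) <= u (S n) - u n) by nra.
          assert (gm (s (S n)) * D n <= g * D n) by nra. lra. }
        rewrite Esn in IH |- *. lra. }
  assert (HsumD : sum_range 3 N D <= /4).
  { specialize (HQ N ltac:(lia) ltac:(lia)).
    assert (EN : sum_range 3 N D = sum_range 3 (N-1) D + D N).
    { replace N with (S (N-1)) at 1 by lia. rewrite sr_S by lia. do 3 f_equal. lia. }
    assert (HDN := HD0 N ltac:(lia)).
    assert (Hg := Hgam N ltac:(lia)).
    assert (HS0 : 0 <= sum_range 3 N D).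
    { rewrite <- (sr_base D). 
      assert (sum_range 3 2 D = sum_range 3 N (fun _ => 0)).
      { rewrite sr_base. unfold sum_range. induction (N + 1 - 3)%nat; simpl; lra. }
      rewrite H. apply sr_le. intros; apply HD0; lia. }
    assert (H1 : (1 - g) * sum_range 3 N D <= u N) by nra.
    assert (E1 : 1 - g = 2 * s N / (1 + s N)) by (unfold g, gm; field; lra).
    assert (H2 : sum_range 3 N D <= u N * ((1 + s N) / (2 * s N))).
    { rewrite E1 in H1. 
      replace (sum_range 3 N D) with ((2 * s N / (1 + s N) * sum_range 3 N D) * ((1 + s N) / (2 * s N)))
        by (field; lra).
      apply Rmult_le_compat_r. apply Rlt_le; pos. exact H1. }
    assert (H3 : u N * ((1 + s N) / (2 * s N)) <= a / (4 * s N ^ 3)).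
    { unfold u. destruct (Hs (N-1)%nat ltac:(lia)). apply (U_small a); auto; try (apply Hrec; lia). }
    assert (H4 : a / (4 * s N ^ 3) <= /4).
    { apply div_le_l. pos. lra. }
    lra. }
  set (F1 := fun i => ln (s i)).
  set (G := fun i => - / s i ^ 2).
  assert (Hup : sum_range 3 N u <= /2 * (F1 2%nat - F1 N) + a / 8 * (G 2%nat - G N)).
  { rewrite <- (sr_tele F1 N) by lia. rewrite <- (sr_tele G N) by lia.
    rewrite <- !sr_scal, <- sr_plus. apply sr_le. intros i Hi.
    unfold u, F1, G. destruct (Hs i ltac:(lia)). destruct (Hs (i-1)%nat ltac:(lia)).
    replace (- / s (i - 1)%nat ^ 2 - - / s i ^ 2) with (/ s i ^ 2 - / s (i-1)%nat ^ 2) by ring.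
    apply (U_upper a); auto; try (apply Hrec; lia). }
  assert (Hlo : /2 * (F1 2%nat - F1 N) - 3/2 * (s 2%nat - s N) <= sum_range 3 N u).
  { rewrite <- (sr_tele F1 N) by lia. rewrite <- (sr_tele s N) by lia.
    rewrite <- !sr_scal, <- sr_minus. apply sr_le. intros i Hi.
    unfold u, F1. destruct (Hs i ltac:(lia)). destruct (Hs (i-1)%nat ltac:(lia)).
    apply (U_lower a); auto; try (apply Hrec; lia); try (apply Hai; lia). }
  assert (ET : sum_range 3 N T = sum_range 3 N u - sum_range 3 N D).
  { unfold D. rewrite sr_minus. ring. }
  destruct (Hs 2%nat ltac:(lia)) as [Hs20 Hs21].
  assert (Hl2 : F1 2%nat <= 0).
  { unfold F1. rewrite <- ln_1. apply ln_le; lra. }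
  assert (Hl2' : -1 <= F1 2%nat).
  { unfold F1. pose proof (ln_ge_1inv (s 2%nat) Hs20).
    assert (/ s 2%nat <= 2).
    { replace 2 with (/ / 2) by (field). apply Rinv_le_contravar; lra. }
    lra. }
  assert (HG : a / 8 * (G 2%nat - G N) <= /8).
  { unfold G. assert (0 < / s 2%nat ^ 2) by pos.
    assert (a * / s N ^ 2 <= 1).
    { apply div_le_l. pos. lra. }
    assert (a / 8 * (- / s 2%nat ^ 2 - - / s N ^ 2) = / 8 * (a * / s N ^2) - a / 8 * / s 2%nat ^ 2) by (field; split; lra).
    assert (0 <= a / 8 * / s 2%nat ^ 2). { apply Rlt_le. pos. }
    lra. }
  assert (HsumD0 : 0 <= sum_range 3 N D).
  { assert (sum_range 3 2 D = sum_range 3 N (fun _ => 0)).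
    { rewrite sr_base. unfold sum_range. induction (N + 1 - 3)%nat; simpl; lra. }
    rewrite <- (sr_base D). rewrite H. apply sr_le. intros; apply HD0; lia. }
  unfold F1 in *. split; lra.
Qed.

Lemma exp3_le : exp 3 <= 27.
Proof.
  replace 3 with (1 + 1 + 1) by ring. rewrite !exp_plus.
  pose proof exp_le_3. pose proof (exp_pos 1). nra.
Qed.

Theorem lemma11 (w : nat -> R)
  (hpos : forall N : nat, 0 < w N)
  (hlow : is_lim_seq (fun N : nat => (ln (ln (INR N))) ^ 2 / w N) 0)
  (hup : is_lim_seq (fun N : nat => w N / (ln (INR N)) ^ 2) 0) :
  exists (C : R) (N0 : nat), forall N : nat, (N0 <= N)%nat ->
    Rabs (total_T w N - ln (INR N) / 6) <= C * ln (ln (INR N)).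
Proof.
  apply is_lim_seq_spec in hlow. apply is_lim_seq_spec in hup.
  destruct (hlow (mkposreal 1 Rlt_0_1)) as [N1 HN1].
  destruct (hup (mkposreal 1 Rlt_0_1)) as [N2 HN2].
  assert (HM : exists M : nat, 46657 <= INR M).
  { exists (7^6)%nat. rewrite pow_INR. simpl INR. lra. }
  destruct HM as [M HM].
  exists 4, (N1 + N2 + M)%nat. intros N HN.
  specialize (HN1 N ltac:(lia)). specialize (HN2 N ltac:(lia)). simpl in HN1, HN2.
  rewrite Rminus_0_r in HN1, HN2.
  assert (HNr : 46657 <= INR N).
  { apply Rle_trans with (INR M). exact HM. apply le_INR. lia. }
  set (L := ln (INR N)) in *.
  set (wN := w N) in *.
  assert (HwN := hpos N). fold wN in HwN.
  assert (HL3 : 3 <= L).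
  { unfold L. rewrite <- (ln_exp 3). apply ln_le. apply exp_pos. pose proof exp3_le. lra. }
  assert (HLL : 1 <= ln L).
  { rewrite <- (ln_exp 1). apply ln_le. apply exp_pos. pose proof exp_le_3. lra. }
  assert (Hw1 : 1 <= wN).
  { apply Rabs_def2 in HN1. destruct HN1 as [HN1 _].
    assert (ln L ^ 2 < wN).
    { apply Rmult_lt_reg_r with (/ wN). pos. 
      replace (wN * / wN) with 1 by (field; lra). exact HN1. }
    nra. }
  assert (HwL : wN <= L ^ 2).
  { apply Rabs_def2 in HN2. destruct HN2 as [HN2 _].
    assert (0 < L ^ 2) by pos.
    apply Rmult_le_reg_r with (/ L ^ 2). pos.
    replace (L ^ 2 * / L ^ 2) with 1 by (field; lra). unfold Rdiv in HN2. change (L * (L * 1)) with (L ^ 2) in HN2. lra. }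
  assert (HN0 : 0 < INR N) by lra.
  set (r := Rpower (INR N) (1/6)).
  assert (Hr0 : 0 < r) by (unfold r, Rpower; apply exp_pos).
  assert (Hr6 : r ^ 6 = INR N).
  { unfold r. rewrite <- Rpower_pow by (unfold Rpower; apply exp_pos).
    rewrite Rpower_mult. replace (1/6 * INR 6) with 1 by (simpl; field). apply Rpower_1; lra. }
  assert (Hlnr : ln r = L / 6).
  { unfold r. rewrite ln_Rpower. unfold L. field. }
  assert (HLr : L <= 6 * r).
  { pose proof (ln_le_sub1 r Hr0). lra. }
  assert (Hr6' : 6 <= r).
  { destruct (Rle_lt_dec 6 r) as [h|h]. exact h.
    assert (r ^ 6 <= 6 ^ 6) by (apply pow_incr; lra). lra. }
  set (q := Rpower (INR N) (-(2/3))).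
  assert (Hq : q = / r ^ 4).
  { unfold q, r. rewrite <- Rpower_pow by (unfold Rpower; apply exp_pos).
    rewrite Rpower_mult, <- Rpower_Ropp. f_equal. simpl. field. }
  assert (Hlnq : ln q = - (2/3) * L).
  { unfold q. rewrite ln_Rpower. reflexivity. }
  set (eps := q * wN).
  assert (Hq0 : 0 < q) by (rewrite Hq; pos).
  assert (He1 : eps <= 1).
  { unfold eps. rewrite Hq.
    assert (wN <= 36 * r^2) by nra.
    apply Rle_trans with (/ r^4 * (36 * r^2)). apply Rmult_le_compat_l. apply Rlt_le; pos. lra.
    replace (/ r ^ 4 * (36 * r ^ 2)) with (36 / r^2) by (field; lra).
    apply div_le_l. pos. nra. }
  assert (HeN : / INR N <= eps).
  { unfold eps. rewrite Hq, <- Hr6.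
    apply Rle_trans with (/ r^4). apply Rinv_le_contravar. pos.
    assert (1 <= r^2) by nra. assert (0 < r^4) by pos.
    replace (r^6) with (r^4 * r^2) by ring. nra.
    assert (0 < /r^4) by pos. nra. }
  assert (Heps0 : 0 < eps) by (unfold eps; pos).
  assert (Htheta : theta w N = 1 + eps) by reflexivity.
  set (th := 1 + eps) in *.
  set (a := / (INR N * th ^ 2)).
  assert (Hth1 : 1 <= th) by (unfold th; lra).
  assert (Hth2 : th <= 2) by (unfold th; lra).
  assert (Ha0 : 0 < a) by (unfold a; pos).
  assert (Hsq2 : forall i, (1 <= i <= N)%nat -> sq_i w N i ^ 2 = 1 - (INR i - 1) * a).
  { intros i Hi. unfold sq_i. rewrite Htheta. fold th. rewrite pow2_sqrt.
    unfold a. field. split; lra.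
    assert (1 <= INR i) by (replace 1 with (INR 1) by reflexivity; apply le_INR; lia).
    assert (INR i <= INR N) by (apply le_INR; lia).
    assert ((INR i - 1) / (INR N * th ^ 2) <= 1).
    { apply div_le_l. pos. assert (1 <= th^2) by nra. assert (INR N * 1 <= INR N * th^2) by (apply Rmult_le_compat_l; lra). lra. }
    lra. }
  assert (HN3 : (3 <= N)%nat).
  { destruct (Compare_dec.le_lt_dec 3 N) as [h|h]. exact h.
    apply lt_INR in h. simpl in h. lra. }
  assert (HNa : INR N * a = / th ^ 2) by (unfold a; field; split; lra).
  assert (Hth2' : 1 <= th ^ 2) by nra.
  assert (HNa1 : INR N * a <= 1).
  { rewrite HNa. replace 1 with (/1) by field. apply Rinv_le_contravar; lra. }
  set (s := sq_i w N).
  assert (Hs0 : forall i, 0 <= s i) by (intro; apply sqrt_pos).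
  assert (Hs : forall i, (2 <= i <= N)%nat -> 0 < s i /\ s i <= 1).
  { intros i Hi. assert (E := Hsq2 i ltac:(lia)). fold s in E.
    assert (1 <= INR i) by (replace 1 with (INR 1) by reflexivity; apply le_INR; lia).
    assert (INR i <= INR N) by (apply le_INR; lia).
    assert ((INR i - 1) * a < 1) by nra.
    assert (0 <= (INR i - 1) * a) by nra.
    specialize (Hs0 i). split; nra. }
  assert (Hrec : forall i, (3 <= i <= N)%nat -> s (i-1)%nat ^ 2 = s i ^ 2 + a).
  { intros i Hi. unfold s. rewrite !Hsq2 by lia. rewrite minus_INR by lia. simpl (INR 1). ring. }
  assert (EsN : s N ^ 2 = 1 - (INR N - 1) * a) by (apply Hsq2; lia).
  assert (HaN : a <= s N ^ 2) by nra.
  set (X := th ^ 2 - 1 + / INR N).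
  assert (HX : s N ^ 2 * th ^ 2 = X).
  { rewrite EsN. unfold X, a. field. split; lra. }
  assert (HX1 : 2 * eps <= X) by (unfold X, th; assert (0 < / INR N) by pos; nra).
  assert (HX2 : X <= 4 * eps) by (unfold X, th; nra).
  assert (HaN3 : a <= s N ^ 3).
  { assert (He3 : / INR N ^ 2 <= eps ^ 3).
    { rewrite <- Hr6. apply Rle_trans with (q ^ 3).
      right. rewrite Hq. field. lra.
      apply pow_incr. split. lra. unfold eps. nra. }
    assert (Ha2 : a ^ 2 = / INR N ^ 2 / th ^ 4) by (unfold a; field; split; lra).
    assert (Hy : 2 * eps / th ^ 2 <= s N ^ 2).
    { apply div_le_l. pos. lra. }
    assert (Hy3 : (2 * eps / th ^ 2) ^ 3 <= (s N ^ 2) ^ 3).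
    { apply pow_incr. split; [|exact Hy]. apply Rlt_le; pos. }
    assert (E8 : (2 * eps / th ^ 2) ^ 3 = 8 * eps ^ 3 / th ^ 6) by (field; lra).
    assert (Hfin : a ^ 2 <= (s N ^ 3) ^ 2).
    { replace ((s N ^ 3) ^ 2) with ((s N ^ 2) ^ 3) by ring.
      apply Rle_trans with (8 * eps ^ 3 / th ^ 6); [|lra].
      rewrite Ha2.
      assert (/ INR N ^ 2 / th ^ 4 <= 8 * / INR N ^ 2 / th ^ 6).
      { unfold Rdiv. assert (0 < / INR N ^ 2) by pos.
        assert (/ th ^ 4 <= 8 * / th ^ 6).
        { replace (/ th ^ 4) with (th^2 * / th^6) by (field; lra).
          apply Rmult_le_compat_r. apply Rlt_le; pos. nra. }
        nra. }
      assert (8 * / INR N ^ 2 / th ^ 6 <= 8 * eps ^ 3 / th ^ 6).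
      { unfold Rdiv. apply Rmult_le_compat_r. apply Rlt_le; pos. lra. }
      lra. }
    assert (0 <= s N ^ 3) by (apply pow_le; apply Hs0).
    destruct (Rle_lt_dec a (s N ^ 3)) as [h|h]. exact h. nra. }
  assert (Hs2 : / 2 <= s 2%nat).
  { assert (E := Hsq2 2%nat ltac:(lia)). fold s in E. simpl (INR 2) in E.
    assert (a <= / INR N).
    { unfold a. apply Rinv_le_contravar. pos. assert (INR N * 1 <= INR N * th^2) by (apply Rmult_le_compat_l; lra). lra. }
    assert (/ INR N <= / 46657) by (apply Rinv_le_contravar; lra).
    specialize (Hs0 2%nat). nra. }
  assert (HT2 : T_delta w N 2 = 0) by reflexivity.
  assert (HTr : forall i, (2 <= i < N)%nat -> T_delta w N (S i) =
     ((1 - s (S i))/(1 + s (S i)) - (1 - s (S i))/(1 + s i)) + (1 - s (S i))/(1 + s (S i)) * T_delta w N i).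
  { intros i Hi. unfold T_delta. rewrite T_rec by lia. unfold delta_, gamma_, m_, r_.
    replace (S i - 1)%nat with i by lia. reflexivity. }
  destruct (main_bound N s a (T_delta w N) HN3 Ha0 Hs Hrec HaN HaN3 Hs2 HT2 HTr) as [B1 B2].
  change (sum_range 3 N (T_delta w N)) with (total_T w N) in B1, B2.
  destruct (Hs N ltac:(lia)) as [HsN0 HsN1].
  assert (HlnsN : 2 * ln (s N) = ln X - ln (th ^ 2)).
  { rewrite <- ln_div by (try pos; unfold X; assert (0 < / INR N) by pos; nra).
    rewrite <- HX. replace (s N ^ 2 * th ^ 2 / th ^ 2) with (s N * s N) by (field; lra).
    rewrite ln_mult by lra. ring. }
  assert (Hln2 : 0 <= ln 2 <= 1).
  { split. rewrite <- ln_1. apply ln_le; lra. pose proof (ln_le_sub1 2). lra. }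
  assert (Hln4 : ln 4 = 2 * ln 2).
  { replace 4 with (2 * 2) by ring. rewrite ln_mult by lra. ring. }
  assert (Hlnth : 0 <= ln (th ^ 2) <= ln 4).
  { split. rewrite <- ln_1. apply ln_le; lra. apply ln_le. lra. nra. }
  assert (HlnX1 : ln 2 + ln q + ln wN <= ln X).
  { rewrite <- !ln_mult by (try pos; lra). apply ln_le. pos. unfold eps in HX1. lra. }
  assert (HlnX2 : ln X <= ln 4 + ln q + ln wN).
  { rewrite <- !ln_mult by (try pos; lra). apply ln_le. unfold eps in HX1. assert (0 < q * wN) by pos. lra.
    unfold eps in HX2. lra. }
  assert (Hlnw : 0 <= ln wN <= 2 * ln L).
  { split. rewrite <- ln_1. apply ln_le; lra.
    replace (2 * ln L) with (ln (L * L)) by (rewrite ln_mult by lra; ring).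
    apply ln_le. lra. nra. }
  rewrite Hlnq in HlnX1, HlnX2.
  apply Rabs_le. split; nra.
Qed.
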